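(* There is an absolute constant $C$ such that the following holds. Let $A=(\Sigma, Q, Q_0, \delta, F)$ be an NFA with $n$ states that remembers the last symbol. For each symbol $a \in \Sigma$, let $Q_a=\bigcup_{q\in Q}\delta(q,a) \subseteq Q$ be the set of states reachable by a transition by $a$, and let $n_1 = \max_{a \in \Sigma} |Q_a|$. Then there is a DFA with at most $2^{n-n_1} \cdot (g(n_1)+Cn_1^2)$ states recognizing $L(A)$.
   Context: Landau's function is $g(m)=\max\{\operatorname{lcm}(p_1,\ldots,p_k) : k\geqslant 1,\ p_i\geqslant 1 \text{ integers},\ p_1+\cdots+p_k\leqslant m\}$. An NFA is a quintuple $(\Sigma,Q,Q_0,\delta,F)$ with set of initial states $Q_0\subseteq Q$, transition function $\delta\colon Q\times\Sigma\to 2^Q$ and accepting states $F$. A DFA is an NFA with one initial state and exactly one transition from each state by each symbol. An NFA remembers the last symbol if its state set is a disjoint union of subsets $P_a$ ($a\in\Sigma$) with $\delta(q,a)\subseteq P_a$ for all $q\in Q$, $a\in\Sigma$. *)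

(* Defs.v *)
From mathcomp Require Import all_boot.
Set Implicit Arguments. Unset Strict Implicit. Unset Printing Implicit Defensive.

(* Landau's function g(m) = max lcm(p_1,...,p_k) over p_i >= 1 with
   p_1 + ... + p_k <= m.  Since k <= m, a choice of parts is encoded as
   f : 'I_m -> 'I_(m+1), the parts being the nonzero values of f.
   (The empty choice gives lcm 1, so g(0) = 1; for m >= 1 this agrees
   with requiring k >= 1.) *)
Definition landau (m : nat) : nat :=
  \max_(f : {ffun 'I_m -> 'I_m.+1} | \sum_(i < m) (f i : nat) <= m)
     \big[lcmn/1]_(i < m | (f i : nat) != 0) (f i : nat).

Record nfa (Sigma Q : finType) := NFA {
  nfa_init : {set Q};
  nfa_delta : Q -> Sigma -> {set Q};
  nfa_final : {set Q}
}.

Definition nfa_step (Sigma Q : finType) (A : nfa Sigma Q) (S : {set Q}) (a : Sigma)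
  : {set Q} := \bigcup_(q in S) nfa_delta A q a.

Definition nfa_reach (Sigma Q : finType) (A : nfa Sigma Q) (w : seq Sigma) : {set Q} :=
  foldl (nfa_step A) (nfa_init A) w.

Definition nfa_accepts (Sigma Q : finType) (A : nfa Sigma Q) (w : seq Sigma) : bool :=
  nfa_reach A w :&: nfa_final A != set0.

Record dfa (Sigma D : finType) := DFA {
  dfa_init : D;
  dfa_delta : D -> Sigma -> D;
  dfa_final : {set D}
}.

Definition dfa_accepts (Sigma D : finType) (M : dfa Sigma D) (w : seq Sigma) : bool :=
  foldl (dfa_delta M) (dfa_init M) w \in dfa_final M.

Definition remembers_last (Sigma Q : finType) (A : nfa Sigma Q) : Prop :=
  exists P : Sigma -> {set Q},
    [/\ (forall a b, a != b -> [disjoint P a & P b]),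
        \bigcup_(a : Sigma) P a = [set: Q]
      & forall q a, nfa_delta A q a \subset P a].

Definition Qsym (Sigma Q : finType) (A : nfa Sigma Q) (a : Sigma) : {set Q} :=
  \bigcup_(q : Q) nfa_delta A q a.

Definition n1 (Sigma Q : finType) (A : nfa Sigma Q) : nat :=
  \max_(a : Sigma) #|Qsym A a|.

(* Main.v *)
Require Import Defs.
From mathcomp Require Import all_boot.
From mathcomp Require Import zify.
Set Implicit Arguments. Unset Strict Implicit. Unset Printing Implicit Defensive.

Lemma bez_mod a b c : 0 < c -> exists al be, (al * a + be * b) %% c = gcdn a b %% c.
Proof.
move=> c0; case: (posnP a) => [->|a0].
  by exists 0, 1; rewrite gcd0n mul1n.
have [x _ Hx] := Bezoutl b a0.
set y := (gcdn a b + x * b) %/ a.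
have Hy : y * a = gcdn a b + x * b by rewrite /y divnK.
exists y, (x * c.-1); rewrite Hy.
have -> : gcdn a b + x * b + x * c.-1 * b = (x * b) * c + gcdn a b.
  case: c c0 {Hy} => // c _ /=; rewrite mulnS; nia.
by rewrite modnMDl.
Qed.

Lemma foldr_gcd_dvd (G : seq nat) z : z \in G -> foldr gcdn 0 G %| z.
Proof.
elim: G => //= a G IH; rewrite inE => /orP [/eqP ->|H].
  exact: dvdn_gcdl.
exact: dvdn_trans (dvdn_gcdr _ _) (IH H).
Qed.

Section Frob.
Variables (G : seq nat) (c B : nat) (P : nat -> Prop).
Hypotheses (cG : c \in G) (c0 : 0 < c) (GB : forall z, z \in G -> z <= B)
  (P0 : P 0) (PG : forall x z, P x -> z \in G -> P (x + z)).

Definition Fm (S : {set 'I_c}) : {set 'I_c} :=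
  [set r' : 'I_c | [|| (r' : nat) == 0, r' \in S |
     [exists r in S, has (fun z => (r' : nat) == (r + z) %% c) G]]].

Lemma Fm_mono : {homo Fm : X Y / X \subset Y}.
Proof.
move=> X Y /subsetP XY; apply/subsetP => r; rewrite !inE.
case/or3P => [->//|/XY ->|/existsP [r0 /andP [H1 H2]]]; first by rewrite orbT.
by apply/or3P; apply: Or33; apply/existsP; exists r0; rewrite XY.
Qed.

Lemma iterF_real t (r : 'I_c) : r \in iter t Fm set0 ->
  exists x, [/\ P x, x <= t * B & x %% c = r].
Proof.
elim: t r => [|t IH] r /=; first by rewrite inE.
rewrite inE; case/or3P => [/eqP H|/IH [x [Px Hx Hr]]|/existsP [r0 /andP [H1 /hasP [z zG /eqP Hz]]]].
- by exists 0; split => //; rewrite mod0n H.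
- by exists x; split => //; rewrite mulSn; lia.
- have [x [Px Hx Hr]] := IH _ H1.
  exists (x + z); split.
  + exact: PG.
  + by rewrite mulSn; have := GB zG; lia.
  + by rewrite Hz -Hr modnDml.
Qed.

Definition FS := fixset Fm.

Definition Good x := Ordinal (ltn_pmod x c0) \in FS.

Lemma FS_closed (r : 'I_c) z : r \in FS -> z \in G -> Ordinal (ltn_pmod (r + z) c0) \in FS.
Proof.
move=> Hr zG; rewrite /FS -(fixsetK Fm_mono) inE; apply/or3P; apply: Or33.
by apply/existsP; exists r; rewrite Hr /=; apply/hasP; exists z.
Qed.

Lemma Good0 : Good 0.
Proof.
rewrite /Good /FS -(fixsetK Fm_mono) inE; apply/orP; left; apply/eqP; exact: mod0n.
Qed.

Lemma Good_mod x y : x %% c = y %% c -> Good x = Good y.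
Proof.
move=> H; rewrite /Good.
by have -> : Ordinal (ltn_pmod x c0) = Ordinal (ltn_pmod y c0) by apply: val_inj; rewrite /= H.
Qed.

Lemma GoodG x z : Good x -> z \in G -> Good (x + z).
Proof.
move=> Hx zG; have := FS_closed Hx zG.
have E : (x %% c + z) %% c = (x + z) %% c by rewrite modnDml.
by rewrite -/(Good (x %% c + z)) (Good_mod E).
Qed.

Definition Comb y := forall x, Good x -> Good (x + y).

Lemma Comb_add y1 y2 : Comb y1 -> Comb y2 -> Comb (y1 + y2).
Proof. by move=> H1 H2 x Hx; rewrite addnA; apply: H2; apply: H1. Qed.

Lemma Comb_mul n y : Comb y -> Comb (n * y).
Proof.
move=> H; elim: n => [|n IH]; first by move=> x; rewrite mul0n addn0.
by rewrite mulSn; apply: Comb_add.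
Qed.

Lemma Comb_mod y y' : y %% c = y' %% c -> Comb y -> Comb y'.
Proof.
move=> E H x Hx; rewrite -(Good_mod (x := x + y)) ?H //.
by rewrite -modnDmr E modnDmr.
Qed.

Lemma Comb_gcd l : all (fun z => z \in G) l -> Comb (foldr gcdn 0 l).
Proof.
elim: l => [|z l IH] /=; first by move=> _ x; rewrite addn0.
case/andP => zG /IH Hl.
have [al [be H]] := bez_mod z (foldr gcdn 0 l) c0.
apply: (Comb_mod H); apply: Comb_add; apply: Comb_mul => //.
by move=> x Hx; apply: GoodG.
Qed.

Lemma frob x : foldr gcdn 0 G %| x -> c * B <= x -> P x.
Proof.
move=> /dvdnP [q ->] Hx.
have HG : Good (q * foldr gcdn 0 G).
  have := Comb_mul q (Comb_gcd (introT allP (fun z (H : z \in G) => H))) Good0.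
  by rewrite add0n.
have Hsub := iter_sub_fix Fm_mono #|'I_c|.
have [x0 [Px0 Hx0 Hr]] := iterF_real HG.
rewrite card_ord /= in Hx0.
have H1 : x0 <= q * foldr gcdn 0 G by lia.
have /dvdnP [m Hm] : c %| q * foldr gcdn 0 G - x0.
  by rewrite -eqn_mod_dvd // Hr.
have -> : q * foldr gcdn 0 G = x0 + m * c by lia.
elim: m {Hm} => [|m IH]; first by rewrite addn0.
by rewrite mulSnr addnA; apply: PG.
Qed.

End Frob.

Section Unary.
Variables (V : finType) (e : rel V).

Definition walk (w : nat -> V) (l : nat) := forall i, i < l -> e (w i) (w i.+1).
Definition wk l x y := exists w, [/\ w 0 = x, w l = y & walk w l].

Fixpoint wkb l x y := if l is l'.+1 then [exists z, e x z && wkb l' z y] else x == y.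

Lemma wkP l x y : reflect (wk l x y) (wkb l x y).
Proof.
elim: l x => [|l IH] x /=.
  apply: (iffP eqP) => [->|[w [<- <- _]]] //.
  by exists (fun _ => y); split.
apply: (iffP existsP) => [[z /andP [exz /IH [w [w0 wl ww]]]]|[w [w0 wl ww]]].
  exists (fun i => if i is i'.+1 then w i' else x); split => //.
  by case=> [|i] Hi //=; [rewrite w0 | apply: ww].
exists (w 1); rewrite -w0 ww //=; apply/IH.
by exists (fun i => w i.+1); split => // i Hi; apply: ww.
Qed.

Definition wcat (w w' : nat -> V) l := fun i => if i <= l then w i else w' (i - l).

Lemma walk_cat w w' l l' : walk w l -> walk w' l' -> w l = w' 0 ->
  walk (wcat w w' l) (l + l').
Proof.
move=> h h' E i Hi; rewrite /wcat.
case: (ltngtP i l) => H /=.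
- by apply: h.
- rewrite subSn ?(ltnW H) //; apply: h'; lia.
- subst i; rewrite subSn // subnn E; apply: h'; lia.
Qed.

Lemma wk_cat a b x y z : wk a x y -> wk b y z -> wk (a + b) x z.
Proof.
move=> [w [w0 wa ww]] [w' [w'0 w'b ww']].
exists (wcat w w' a); split.
- by rewrite /wcat leq0n.
- rewrite /wcat /=; case: ifP => H.
    have E : b = 0 by lia.
    by subst b; rewrite addn0 wa -w'0 -w'b.
  by rewrite addKn.
- by apply: walk_cat => //; rewrite wa w'0.
Qed.

Lemma walk_sub w l i j : walk w l -> i <= j -> j <= l ->
  walk (fun t => w (i + t)) (j - i).
Proof. move=> h Hij Hjl t Ht; rewrite addnS; apply: h; lia. Qed.

Lemma wk_sub w l i j : walk w l -> i <= j -> j <= l -> wk (j - i) (w i) (w j).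
Proof.
move=> h Hij Hjl; exists (fun t => w (i + t)); split.
- by rewrite /= addn0.
- by rewrite /= subnKC.
- by apply: (walk_sub h).
Qed.

Definition wrem (w : nat -> V) i m := fun t => if t <= i then w t else w (t + m).

Lemma walk_rem w l i i' : walk w l -> i <= i' -> i' <= l -> w i = w i' ->
  walk (wrem w i (i' - i)) (l - (i' - i)).
Proof.
move=> h H1 H2 E t Ht; rewrite /wrem.
case: (ltngtP t i) => H /=.
- apply: h; lia.
- rewrite addSn; apply: h; lia.
- subst t; rewrite addSn subnKC // E; apply: h; lia.
Qed.

Lemma wrem0 w i m : wrem w i m 0 = w 0.
Proof. by rewrite /wrem leq0n. Qed.

Lemma wrem_end w l i i' : i <= i' -> i' <= l -> w i = w i' ->
  wrem w i (i' - i) (l - (i' - i)) = w l.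
Proof.
move=> H1 H2 E; rewrite /wrem; case: ifP => H.
  have -> : l = i' by lia.
  by have -> : i' - (i' - i) = i by lia.
by rewrite subnK //; lia.
Qed.

Definition U := [set y | [exists x, e x y]].
Definition k := #|U|.

Lemma walk_U w l i : walk w l -> 0 < i -> i <= l -> w i \in U.
Proof.
move=> h H1 H2; rewrite inE; apply/existsP; exists (w i.-1).
by rewrite -{2}(prednK H1); apply: h; lia.
Qed.

Lemma pigeon w l : walk w l -> k < l ->
  exists i i', [/\ 0 < i, i < i', i' <= k.+1 & w i = w i'].
Proof.
move=> h Hl.
pose f := fun t : 'I_k.+1 => w t.+1.
case: (boolP (injectiveb f)) => [/injectiveP inj|/injectivePn [x [y nxy fxy]]].
  have : #|[set f t | t in [set: 'I_k.+1]]| <= k.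
    apply: subset_leq_card; apply/subsetP => z /imsetP [t _ ->].
    apply: (walk_U h) => //; have := ltn_ord t; lia.
  by rewrite card_imset // cardsT card_ord ltnn.
case: (ltngtP x y) => H.
- exists x.+1, y.+1; split => //; have := ltn_ord y; lia.
- exists y.+1, x.+1; split => //; have := ltn_ord x; lia.
- by move: nxy; rewrite (val_inj H) eqxx.
Qed.


Lemma wk_rem w l i i' : walk w l -> i < i' -> i' <= l -> w i = w i' ->
  wk (l - (i' - i)) (w 0) (w l).
Proof.
move=> h H1 H2 E; exists (wrem w i (i' - i)); split.
- exact: wrem0.
- exact: wrem_end (ltnW H1) H2 E.
- exact: walk_rem (ltnW H1) H2 E.
Qed.

Lemma wk_short l x y : wk l x y -> exists l', [/\ l' <= k, l' <= l & wk l' x y].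
Proof.
elim/ltn_ind: l x y => l IH x y [w [w0 wl ww]].
case: (leqP l k) => Hl.
  by exists l; split => //; exists w.
have [i [i' [H0 H1 H2 E]]] := pigeon ww Hl.
have := wk_rem ww H1 (leq_trans H2 Hl) E; rewrite w0 wl => Hr.
have [|l' [L1 L2 L3]] := IH _ _ _ _ Hr; first lia.
exists l'; split => //; lia.
Qed.

Definition d u := \big[gcdn/0]_(l < (3 * k).+1 | wkb l u u) (l : nat).

Lemma d0 l u : wk l u u -> l <= 3 * k -> d u %| l.
Proof.
move=> /wkP H Hl.
have := @biggcdn_inf _ (Ordinal (Hl : l < (3 * k).+1)) (fun l : 'I_(3 * k).+1 => wkb l u u)
  (fun l : 'I_(3 * k).+1 => (l : nat)) l H (dvdnn _).
by [].
Qed.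

Lemma d1 l u : wk l u u -> d u %| l.
Proof.
elim/ltn_ind: l => l IH Hw.
case: (leqP l (3 * k)) => Hl; first exact: d0.
have [w [w0 wl ww]] := Hw.
have Hkl : k < l by lia.
have [i [i' [H0 H1 H2 E]]] := pigeon ww Hkl.
have Hr := wk_rem ww H1 (leq_trans H2 Hkl) E; rewrite w0 wl in Hr.
have Hm : d u %| l - (i' - i) by apply: IH Hr; lia.
have Hc : wk (i' - i) (w i) (w i) by rewrite {2}E; apply: (wk_sub ww); lia.
have Hp : wk (i - 0) (w 0) (w i) by apply: (wk_sub ww); lia.
have Hs : wk (l - i') (w i') (w l) by apply: (wk_sub ww); lia.
rewrite subn0 w0 in Hp; rewrite wl -E in Hs.
have [a [A1 _ A3]] := wk_short Hp.
have [b [B1 _ B3]] := wk_short Hs.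
have Dab := d0 (wk_cat A3 B3) (ltac:(lia)).
have Damb := d0 (wk_cat (wk_cat A3 Hc) B3) (ltac:(lia)).
have Dm : d u %| i' - i.
  by move: Damb; rewrite -addnA (addnC (i' - i)) addnA dvdn_addr.
have -> : l = (l - (i' - i)) + (i' - i) by lia.
by rewrite dvdn_add.
Qed.

Lemma d2 a b u v : wk a u v -> wk b v u -> d u %| d v.
Proof.
move=> Ha Hb; apply/dvdn_biggcdP => l /wkP Hl.
have D1 := d1 (wk_cat Ha Hb).
have D2 := d1 (wk_cat (wk_cat Ha Hl) Hb).
by move: D2; rewrite -addnA (addnC l) addnA dvdn_addr.
Qed.

Lemma d4 u : 0 < d u -> exists l, [/\ 0 < l, l <= 3 * k & wk l u u].
Proof.
case: (boolP [exists l : 'I_(3 * k).+1, (0 < l) && wkb l u u]).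
  move=> /existsP [l /andP [H1 /wkP H2]]; exists l; split => //.
  by have := ltn_ord l; lia.
move=> /existsPn H; rewrite /d big1 //.
move=> l Hl; have := H l; rewrite Hl andbT; lia.
Qed.

Lemma d5 l u : wk l u u -> 0 < l -> exists l' (w : nat -> V),
  [/\ 0 < l', w 0 = u, w l' = u, walk w l' &
      forall s t, s < l' -> t < l' -> w s = w t -> s = t].
Proof.
elim/ltn_ind: l => l IH [w [w0 wl ww]] Hl.
case: (boolP (injectiveb (fun t : 'I_l => w t))).
  move/injectiveP => inj; exists l, w; split => // s t Hs Ht Est.
  by have := inj (Ordinal Hs) (Ordinal Ht) Est; case.
move/injectivePn => [x [y nxy Exy]].
have [i [i' [H1 H2 E]]] : exists i i', [/\ i < i', i' < l & w i = w i'].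
  case: (ltngtP x y) => H.
  - by exists x, y; split.
  - by exists y, x; split.
  - by move: nxy; rewrite (val_inj H) eqxx.
have Hr := wk_rem ww H1 (ltnW H2) E; rewrite w0 wl in Hr.
by apply: (IH _ _ Hr); lia.
Qed.

Definition reachb u v := [exists l : 'I_k.+1, wkb l u v].

Lemma reachP u v : reflect (exists l, wk l u v) (reachb u v).
Proof.
apply: (iffP existsP) => [[l /wkP H]|[l H]]; first by exists l.
have [l' [L1 _ L3]] := wk_short H.
by exists (Ordinal (L1 : l' < k.+1)); apply/wkP.
Qed.

Definition R u v := reachb u v && reachb v u.

Lemma R_refl u : R u u.
Proof. by apply/andP; split; apply/reachP; exists 0; exists (fun _ => u); split. Qed.

Lemma R_sym u v : R u v = R v u.
Proof. by rewrite /R andbC. Qed.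

Lemma R_trans u v x : R u v -> R v x -> R u x.
Proof.
move=> /andP [/reachP [a Ha] /reachP [b Hb]] /andP [/reachP [c Hc] /reachP [f Hf]].
apply/andP; split; apply/reachP.
- by exists (a + c); apply: wk_cat Ha Hc.
- by exists (f + b); apply: wk_cat Hf Hb.
Qed.

Definition rep u := odflt u [pick v | R u v].

Lemma rep_eq u v : R u v -> rep u = rep v.
Proof.
move=> Ruv; rewrite /rep (@eq_pick _ _ (fun x => R v x)).
  by case: pickP => [//|H]; have := H v; rewrite R_refl.
move=> x /=; apply/idP/idP => H.
- by apply: R_trans H; rewrite R_sym.
- exact: R_trans H.
Qed.

Lemma rep_spec u : R u (rep u).
Proof.
rewrite /rep; case: pickP => [v H|H] //=.
by have := H u; rewrite R_refl.
Qed.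

Lemma rep_U u : u \in U -> rep u \in U.
Proof.
move=> Hu; have /andP [/reachP [l [w [w0 wl ww]]] _] := rep_spec u.
case: (posnP l) => Hl.
  by subst l; rewrite -wl w0.
by rewrite -wl; apply: (walk_U ww).
Qed.

Lemma d_R u v : R u v -> d u = d v.
Proof.
move=> /andP [/reachP [a Ha] /reachP [b Hb]].
by apply/eqP; rewrite eqn_dvd (d2 Ha Hb) (d2 Hb Ha).
Qed.

Lemma d_le_class u : 0 < d u -> d u <= #|[set v in U | rep v == rep u]|.
Proof.
move=> Hd; have [l [L1 L2 L3]] := d4 Hd.
have [l' [w [H1 w0 wl ww inj]]] := d5 L3 L1.
have Hw : wk l' u u by exists w.
apply: (leq_trans (dvdn_leq H1 (d1 Hw))).
have -> : l' = #|[set w (t : nat) | t : 'I_l']|.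
  rewrite card_imset ?card_ord // => s t Est; apply: val_inj; apply: inj (ltn_ord s) (ltn_ord t) Est.
apply: subset_leq_card.
apply/subsetP => z /imsetP [t _ ->]; rewrite inE; apply/andP; split.
  case: (posnP t) => [->|Ht]; first by rewrite w0 -wl; apply: (walk_U ww).
  by apply: (walk_U ww) => //; apply: ltnW.
apply/eqP; apply: rep_eq; apply/andP; split; apply/reachP.
- exists (l' - t); rewrite -wl; apply: (wk_sub ww) => //; exact: ltnW (ltn_ord t).
- exists (t - 0); rewrite -w0; apply: (wk_sub ww) => //; exact: ltnW (ltn_ord t).
Qed.


Definition Fpart u := if (u \in U) && (rep u == u) then d u else 0.

Lemma Fpart_le u : Fpart u <= #|[set v in U | rep v == u]|.
Proof.
rewrite /Fpart; case: ifP => // /andP [Hu /eqP Hr].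
case: (posnP (d u)) => [->//|Hd].
by have := d_le_class Hd; rewrite Hr.
Qed.

Lemma sum_class : \sum_(r in U) #|[set v in U | rep v == r]| = k.
Proof.
rewrite /k -sum1_card [RHS](partition_big rep (fun r => r \in U)); last exact: rep_U.
by apply: eq_bigr => r _; rewrite sum1dep_card.
Qed.

Lemma Fpart_lek u : Fpart u <= k.
Proof.
apply: (leq_trans (Fpart_le u)); rewrite /k; apply: subset_leq_card.
by apply/subsetP => v; rewrite inE => /andP [].
Qed.

Definition ff : {ffun 'I_k -> 'I_k.+1} := [ffun i => inord (Fpart (enum_val i))].

Lemma ffE i : (ff i : nat) = Fpart (enum_val i).
Proof. by rewrite ffunE inordK // ltnS Fpart_lek. Qed.

Lemma ff_sum : \sum_(i < k) (ff i : nat) <= k.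
Proof.
have -> : \sum_(i < k) (ff i : nat) = \sum_(u in U) Fpart u.
  by rewrite [RHS]big_enum_val; apply: eq_bigr => i _; rewrite ffE.
apply: (@leq_trans (\sum_(r in U) #|[set v in U | rep v == r]|)); first by apply: leq_sum => u _; exact: Fpart_le.
by rewrite sum_class.
Qed.

Definition DD := \big[lcmn/1]_(i < k | (ff i : nat) != 0) (ff i : nat).

Lemma DD_le : DD <= landau k.
Proof.
rewrite /landau /DD.
exact: (@leq_bigmax_cond _ (fun f : {ffun 'I_k -> 'I_k.+1} => \sum_(i < k) (f i : nat) <= k) (fun f : {ffun 'I_k -> 'I_k.+1} => \big[lcmn/1]_(i < k | (f i : nat) != 0) (f i : nat)) ff ff_sum).
Qed.

Lemma DD_gt0 : 0 < DD.
Proof.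
rewrite /DD; elim/big_ind: _ => //.
- by move=> x y Hx Hy; rewrite lcmn_gt0 Hx Hy.
- by move=> i; rewrite lt0n.
Qed.

Lemma d_U u : 0 < d u -> u \in U.
Proof.
move=> Hd; have [l [L1 L2 [w [w0 wl ww]]]] := d4 Hd.
by rewrite -wl; apply: (walk_U ww).
Qed.

Lemma d_dvd_DD u : 0 < d u -> d u %| DD.
Proof.
move=> Hd; have Hu := d_U Hd.
have rU := rep_U Hu.
have Rur := rep_spec u.
have Hrr : rep (rep u) = rep u by rewrite -(rep_eq Rur).
have Hdr : d (rep u) = d u by rewrite (d_R Rur).
pose i := enum_rank_in rU (rep u).
have Hi : enum_val i = rep u by rewrite /i enum_rankK_in.
have Hfi : (ff i : nat) = d u by rewrite ffE Hi /Fpart rU Hrr eqxx Hdr.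
apply: (biglcmn_sup i); first by rewrite Hfi -lt0n.
by rewrite Hfi.
Qed.


Definition gw (w : nat -> V) l := \big[gcdn/0]_(i < l.+1) d (w i).

Lemma gwP m w l : reflect (forall i, i <= l -> m %| d (w i)) (m %| gw w l).
Proof.
apply: (iffP (dvdn_biggcdP _ _ _)) => H i Hi.
- exact: (H (Ordinal (Hi : i < l.+1))).
- by apply: H; rewrite -ltnS.
Qed.

Lemma gw_rem w l i i' : walk w l -> i < i' -> i' <= l -> w i = w i' ->
  gw (wrem w i (i' - i)) (l - (i' - i)) = gw w l.
Proof.
move=> ww H1 H2 E.
have A : forall t, t <= l -> exists t', t' <= l - (i' - i) /\ d (wrem w i (i' - i) t') = d (w t).
  move=> t Ht; rewrite /wrem.
  case: (leqP t i) => Hti; first by exists t; rewrite Hti; split => //; lia.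
  case: (leqP i' t) => Hit.
    exists (t - (i' - i)); split; first lia.
    case: ifP => H; last by rewrite subnK //; lia.
    have -> : t = i' by lia.
    have -> : i' - (i' - i) = i by lia.
    by rewrite E.
  exists i; rewrite leqnn; split; first lia.
  apply: d_R; apply/andP; split; apply/reachP.
  - by exists (t - i); apply: (wk_sub ww); lia.
  - by exists (i' - t); rewrite E; apply: (wk_sub ww); lia.
have B : forall t', t' <= l - (i' - i) -> exists t, t <= l /\ d (wrem w i (i' - i) t') = d (w t).
  move=> t' Ht'; rewrite /wrem; case: ifP => H.
    by exists t'; split => //; lia.
  by exists (t' + (i' - i)); split => //; lia.
apply/eqP; rewrite eqn_dvd; apply/andP; split.
- apply/gwP => t Ht; have [t' [T1 <-]] := A t Ht.
  by move/gwP: (dvdnn (gw (wrem w i (i' - i)) (l - (i' - i)))); apply.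
- apply/gwP => t' Ht'; have [t [T1 ->]] := B t' Ht'.
  by move/gwP: (dvdnn (gw w l)); apply.
Qed.

Lemma shortA l w : walk w l -> exists w' l', [/\ l' <= k, l' <= l, w' 0 = w 0, w' l' = w l &
  walk w' l'] /\ (gw w' l' = gw w l /\ gw w l %| l - l').
Proof.
elim/ltn_ind: l w => l IH w ww.
case: (leqP l k) => Hl.
  by exists w, l; split => //; rewrite subnn dvdn0.
have [i [i' [H0 H1 H2 E]]] := pigeon ww Hl.
have H2' : i' <= l by lia.
have wr := walk_rem ww (ltnW H1) H2' E.
have [|w' [l' [[L1 L2 L3 L4 L5] [L6 L7]]]] := IH _ _ _ wr; first lia.
exists w', l'; rewrite L3 L4 wrem0 (wrem_end (ltnW H1) H2' E).
rewrite L6 (gw_rem ww H1 H2' E) in L7 *; split; first by split => //; lia.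
split => //.
have Hm : gw w l %| i' - i.
  apply: (dvdn_trans (_ : gw w l %| d (w i))).
    by move/gwP: (dvdnn (gw w l)); apply; lia.
  by apply: d1; rewrite {2}E; apply: (wk_sub ww); lia.
have -> : l - l' = (l - (i' - i) - l') + (i' - i) by lia.
by rewrite dvdn_add.
Qed.


Lemma build w l (ys : nat -> nat) : walk w l -> (forall t, t <= l -> wk (ys t) (w t) (w t)) ->
  forall j, j <= l -> wk (j + \sum_(t < j.+1) ys t) (w 0) (w j).
Proof.
move=> ww Hys; elim=> [|j IH] Hj.
  by rewrite big_ord1 add0n; apply: Hys.
rewrite big_ord_recr /=.
have E1 := wk_sub ww (leqnSn j) Hj; rewrite subSnn in E1.
have := wk_cat (wk_cat (IH (ltnW Hj)) E1) (Hys _ Hj).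
by have -> : j + \sum_(i < j.+1) ys i + 1 + ys j.+1 = j.+1 + (\sum_(i < j.+1) ys i + ys j.+1) by lia.
Qed.

Lemma padB w l x : walk w l -> 0 < gw w l -> gw w l %| x -> (3 * k) * (3 * k) <= x ->
  wk (l + x) (w 0) (w l).
Proof.
move=> ww Hg Hdx Hx.
pose G := [seq z <- iota 0 (3 * k).+1 | [exists t : 'I_l.+1, wkb z (w t) (w t)]].
pose P y := exists ys : nat -> nat, y = \sum_(t < l.+1) ys t /\ forall t, t <= l -> wk (ys t) (w t) (w t).
have [t Ht] : exists t : 'I_l.+1, 0 < d (w t).
  case: (boolP [exists t : 'I_l.+1, 0 < d (w t)]) => [/existsP //|/existsPn H].
  have : 0 %| gw w l.
    apply/gwP => i Hi; have := H (Ordinal (Hi : i < l.+1)); rewrite lt0n negbK /=.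
    by move/eqP ->.
  by rewrite dvd0n => /eqP E; rewrite E in Hg.
have [c [C1 C2 C3]] := d4 Ht.
have cG : c \in G.
  rewrite mem_filter mem_iota add0n ltnS C2 andbT leq0n andbT; apply/existsP; exists t; exact/wkP.
have GB : forall z, z \in G -> z <= 3 * k.
  by move=> z; rewrite mem_filter mem_iota add0n ltnS => /andP [_ /andP [_ ->]].
have P0 : P 0.
  exists (fun _ => 0); split; first by rewrite big1.
  by move=> i _; exists (fun _ => w i); split.
have PG : forall y z, P y -> z \in G -> P (y + z).
  move=> y z [ys [Hy Hys]]; rewrite mem_filter => /andP [/existsP [t0 /wkP Ht0] _].
  exists (fun s => ys s + (if s == t0 then z else 0)); split.
    rewrite big_split /= -Hy; congr (_ + _).
    rewrite (bigD1 t0) //= eqxx big1 ?addn0 // => s Hs.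
    by case: ifP => // /eqP /val_inj E; rewrite E eqxx in Hs.
  move=> s Hs; case: eqP => [->|_]; last by rewrite addn0; apply: Hys.
  exact: (wk_cat (Hys _ (ltn_ord t0)) Ht0).
have Hgd : foldr gcdn 0 G %| x.
  apply: dvdn_trans Hdx; apply/gwP => i Hi; apply/dvdn_biggcdP => z Hz.
  apply: foldr_gcd_dvd; rewrite mem_filter mem_iota add0n ltn_ord andbT leq0n andbT.
  by apply/existsP; exists (Ordinal (Hi : i < l.+1)).
have [|ys [-> Hys]] := frob cG C1 GB P0 PG Hgd.
  by apply: leq_trans Hx; apply: leq_mul.
exact: build ww Hys l (leqnn l).
Qed.


Lemma gw_pos w l : 0 < gw w l -> exists t, t <= l /\ 0 < d (w t).
Proof.
move=> Hg; case: (boolP [exists t : 'I_l.+1, 0 < d (w t)]) => [/existsP [t Ht]|/existsPn H].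
  by exists t; split => //; rewrite -ltnS.
have : 0 %| gw w l.
  apply/gwP => i Hi; have := H (Ordinal (Hi : i < l.+1)); rewrite lt0n negbK /=.
  by move/eqP ->.
by rewrite dvd0n => /eqP E; rewrite E in Hg.
Qed.

Lemma gw_DD w l : 0 < gw w l -> gw w l %| DD.
Proof.
move=> /[dup] Hg /gw_pos [t [Ht Hd]].
apply: dvdn_trans (d_dvd_DD Hd).
by move/gwP: (dvdnn (gw w l)); apply.
Qed.

Definition N := (3 * k) * (3 * k) + k + 1.

Lemma per1 p q j : N <= j -> wk j p q -> wk (j + DD) p q.
Proof.
rewrite /N => Hj [w [w0 wl ww]].
have [w' [l' [[L1 L2 L3 L4 L5] [L6 L7]]]] := shortA ww.
have Hg : 0 < gw w j.
  rewrite lt0n; apply/negP => /eqP E; rewrite E dvd0n in L7; lia.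
rewrite -L6 in Hg L7.
have H := padB L5 Hg (x := j + DD - l').
rewrite L3 L4 w0 wl in H.
have -> : j + DD = l' + (j + DD - l') by lia.
apply: H.
  have -> : j + DD - l' = (j - l') + DD by lia.
  by rewrite dvdn_add // gw_DD.
lia.
Qed.

Lemma per2 p q j : N <= j -> wk (j + DD) p q -> wk j p q.
Proof.
rewrite /N => Hj [w [w0 wl ww]].
have [w' [l' [[L1 L2 L3 L4 L5] [L6 L7]]]] := shortA ww.
have Hg : 0 < gw w (j + DD).
  rewrite lt0n; apply/negP => /eqP E; rewrite E dvd0n in L7; lia.
rewrite -L6 in Hg L7.
have H := padB L5 Hg (x := j - l').
rewrite L3 L4 w0 wl in H.
have -> : j = l' + (j - l') by lia.
apply: H.
  have E : j + DD - l' = (j - l') + DD by lia.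
  by rewrite E dvdn_addl ?gw_DD in L7.
lia.
Qed.

Definition Fs (X : {set V}) := [set y | [exists x in X, e x y]].

Lemma wkS j x y : wk j.+1 x y <-> exists z, wk j x z /\ e z y.
Proof.
split.
  move=> [w [w0 wl ww]]; exists (w j); split.
    by rewrite -w0 -{1}(subn0 j); apply: (wk_sub ww).
  by rewrite -wl; apply: ww.
move=> [z [H1 H2]]; rewrite -addn1; apply: wk_cat H1 _.
by exists (fun i => if i is 0 then z else y); split => // [[|i]] //= Hi.
Qed.

Lemma iterFs j X : iter j Fs X = [set y | [exists x in X, wkb j x y]].
Proof.
elim: j => [|j IH] /=.
  apply/setP => y; rewrite inE; apply/idP/existsP => [Hy|[x /andP [Hx /eqP <-]]] //.
  by exists y; rewrite Hy eqxx.
apply/setP => y; rewrite /Fs IH !inE; apply/existsP/existsP.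
  move=> [z /andP [Hz Hzy]]; rewrite inE in Hz; case/existsP: Hz => x /andP [Hx /wkP Hxz].
  exists x; rewrite Hx /=; change (wkb j.+1 x y); apply/wkP; apply/wkS; by exists z.
move=> [x /andP [Hx H]]; move/(wkP j.+1): H => /wkS [z [Hxz Hzy]].
by exists z; rewrite inE Hzy andbT; apply/existsP; exists x; rewrite Hx; apply/wkP.
Qed.

Lemma orbit_per X : iter (N + DD) Fs X = iter N Fs X.
Proof.
rewrite !iterFs; apply/setP => y; rewrite !inE; apply/existsP/existsP => [] [x /andP [Hx H]];
  exists x; rewrite Hx /=; apply/wkP; move/wkP: H.
- by apply: per2.
- by apply: per1.
Qed.

Lemma orbit_mod X i : exists j, j < N + DD /\ iter i Fs X = iter j Fs X.
Proof.
elim/ltn_ind: i => i IH.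
case: (ltnP i (N + DD)) => Hi; first by exists i.
have [|j [Hj E]] := IH (i - DD); first by have := DD_gt0; lia.
exists j; split => //; rewrite -E.
have -> : i = (i - (N + DD)) + (N + DD) by lia.
have -> : i - (N + DD) + (N + DD) - DD = (i - (N + DD)) + N by lia.
by rewrite iterD orbit_per -iterD.
Qed.

Lemma unary : exists M, M <= landau k + (3 * k) * (3 * k) + k + 1 /\
  forall X i, exists j, j < M /\ iter i Fs X = iter j Fs X.
Proof.
exists (N + DD); split; last exact: orbit_mod.
by have := DD_le; rewrite /N; lia.
Qed.

End Unary.

Section Global.
Variables (Sigma Q : finType) (A : nfa Sigma Q).

Lemma dfa_of (R : {set {set Q}}) (Hi : nfa_init A \in R)
  (Hc : forall S b, S \in R -> nfa_step A S b \in R) :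
  exists M : dfa Sigma 'I_#|R|, forall w, dfa_accepts M w = nfa_accepts A w.
Proof.
pose del := fun (i : 'I_#|R|) b => enum_rank_in Hi (nfa_step A (enum_val i) b).
exists (DFA (enum_rank_in Hi (nfa_init A)) del [set i | enum_val i :&: nfa_final A != set0]).
have E : forall w i, enum_val (foldl del i w) = foldl (nfa_step A) (enum_val i) w.
  elim=> [|b w IH] i //=; rewrite IH /del enum_rankK_in //.
  by apply: Hc; apply: enum_valP.
move=> w; rewrite /dfa_accepts /nfa_accepts /nfa_reach /= inE E.
by rewrite enum_rankK_in.
Qed.

Lemma landau_ge1 m : 1 <= landau m.
Proof.
rewrite /landau.
pose f0 : {ffun 'I_m -> 'I_m.+1} := [ffun => ord0].
have := @leq_bigmax_cond _ (fun f : {ffun 'I_m -> 'I_m.+1} => \sum_(i < m) (f i : nat) <= m)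
  (fun f : {ffun 'I_m -> 'I_m.+1} => \big[lcmn/1]_(i < m | (f i : nat) != 0) (f i : nat)) f0.
rewrite big1 ?leq0n; last by move=> i _; rewrite ffunE.
rewrite big1; first by apply.
all: by move=> i; rewrite /f0 ffunE.
Qed.



End Global.

Lemma card_U_le (T : finType) (X Y : {set T}) : #|X :|: Y| <= #|X| + #|Y|.
Proof. by rewrite cardsU leq_subr. Qed.

Theorem lemma4 :
  exists C : nat,
    forall (Sigma Q : finType) (A : nfa Sigma Q),
      remembers_last A ->
      exists m : nat,
        m <= 2 ^ (#|Q| - n1 A) * (landau (n1 A) + C * (n1 A) ^ 2) /\
        exists M : dfa Sigma 'I_m,
          forall w : seq Sigma, dfa_accepts M w = nfa_accepts A w.
Proof.
exists 13 => Sigma Q A [P [Hdisj Hcov Hsub]].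
case: (posnP (n1 A)) => Hn1.
  exists #|powerset [set: Q]|; split.
    rewrite card_powerset cardsT Hn1 subn0 muln0 addn0.
    by rewrite -{1}(muln1 (2 ^ _)) leq_mul2l landau_ge1 orbT.
  by apply: dfa_of => [|S b _]; rewrite powersetE subsetT.
have [a Ha] : exists a, #|Qsym A a| = n1 A.
  case: (pickP (@predT Sigma)) => [a0 _|H0].
    have [|a Ha] := eq_bigmax (fun a => #|Qsym A a|); first by apply/card_gt0P; exists a0.
    by exists a; rewrite /n1 Ha.
  by move: Hn1; rewrite /n1 big_pred0.
pose e := fun x y => y \in nfa_delta A x a.
have [M0 [HM0 Hper]] := unary e.
pose f := fun X => nfa_step A X a.
have Fs_eq : forall X, Fs e X = f X.
  move=> X; apply/setP => y; rewrite inE /f /nfa_step; apply/existsP/bigcupP.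
  - by move=> [x /andP [Hx Hy]]; exists x.
  - by move=> [x Hx Hy]; exists x; rewrite Hx.
have kE : k e = n1 A.
  rewrite /k -Ha; have -> : U e = Qsym A a; last by []; apply/setP => y; rewrite inE /Qsym; apply/existsP/bigcupP.
  - by move=> [x Hy]; exists x.
  - by move=> [x _ Hy]; exists x.
rewrite kE in HM0.
have Hiter : forall i X, iter i f X = iter i (Fs e) X.
  by move=> i X; apply: eq_iter => Y; rewrite Fs_eq.
pose Tset := [set nfa_init A] :|: (powerset (~: P a) :\ set0).
pose Orb := [set iter (nat_of_ord j.2) f (f j.1) | j : ({set Q} * 'I_M0)%type in setX Tset [set: 'I_M0]].
pose R := [set nfa_init A] :|: powerset (~: P a) :|: Orb.
have inOrb : forall T i, T \in Tset -> iter i f (f T) \in Orb.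
  move=> T i HT; have [j [Hj E]] := Hper (f T) i; rewrite Hiter E -Hiter.
  by apply/imsetP; exists (T, Ordinal Hj) => //; rewrite in_setX HT in_setT.
have QP : n1 A <= #|P a|.
  rewrite -Ha; apply: subset_leq_card; apply/bigcupsP => q _; exact: Hsub.
exists #|R|; split.
  pose X := 2 ^ #|~: P a|.
  have X1 : 1 <= X by rewrite expn_gt0.
  have HT : #|Tset| <= X.
    apply: leq_trans (card_U_le _ _) _.
    rewrite cards1 /X -card_powerset (cardsD1 set0 (powerset (~: P a))) powersetE sub0set.
    by [].
  have HO : #|Orb| <= X * M0.
    apply: leq_trans (leq_imset_card _ _) _.
    by rewrite cardsX cardsT card_ord leq_mul2r HT orbT.
  have HR : #|R| <= X * (M0 + 2).
    apply: leq_trans (card_U_le _ _) _.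
    have := card_U_le [set nfa_init A] (powerset (~: P a)).
    rewrite cards1 card_powerset -/X.
    rewrite mulnDr; lia.
  apply: leq_trans HR _; apply: leq_mul.
    rewrite /X leq_pexp2l // cardsCs setCK.
    lia.
  rewrite -mulnn; move: HM0; set t := n1 A => HM0.
  have : t <= t * t by rewrite leq_pmulr.
  nia.
apply: dfa_of => [|S b].
  by rewrite !inE eqxx.
rewrite /R !inE; case: (eqVneq b a) => [->|nba] HS.
  rewrite -/(f S).
  move: HS => /orP [/orP [/eqP ->|HS]|/imsetP [[T j] HT ->]].
  - by apply/orP; right; apply: (inOrb _ 0); rewrite !inE eqxx.
  - case: (eqVneq S set0) => [->|nS0].
      apply/orP; left; apply/orP; right.
      rewrite /f /nfa_step big_pred0 ?sub0set // => q.
      by rewrite inE.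
    by apply/orP; right; apply: (inOrb _ 0); rewrite !inE nS0 HS orbT.
  - by apply/orP; right; rewrite /= -iterS; apply: inOrb; move: HT; rewrite in_setX => /andP [].
apply/orP; left; apply/orP; right.
apply/subsetP => y /bigcupP [q _ Hy]; rewrite in_setC.
have := subsetP (Hsub q b) _ Hy => Hyb.
by rewrite (disjointFr (Hdisj _ _ nba) Hyb).
Qed.
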